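(* Let $1\le i\le n$, let $K\subset\mathbb{R}^n$ be a compact convex set contained in some $i$-dimensional affine subspace, and let $L$ be an $i$-dimensional linear subspace of $\mathbb{R}^n$. Then $\mathrm{r}(K|L;L)\leq\mathrm{r}(K;\mathrm{aff}(K))$.
   Context: $K|L$ denotes the orthogonal projection of $K$ onto $L$, $\mathrm{aff}(K)$ the affine hull of $K$, and for a set $C$ contained in an affine subspace $A$, $\mathrm{r}(C;A)$ denotes the Euclidean inradius of $C$ measured within $A$ (the largest radius of a ball of $A$ contained in $C$). *)

(* Defs.v *)
From HB Require Import structures.
From mathcomp Require Import all_boot all_order all_algebra.
From mathcomp Require Import all_classical all_reals all_analysis.
Set Implicit Arguments. Unset Strict Implicit. Unset Printing Implicit Defensive.
Import Order.TTheory GRing.Theory Num.Theory.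
Import numFieldNormedType.Exports.
Local Open Scope classical_set_scope.
Local Open Scope ring_scope.

Section Defs.
Variables (R : realType) (n : nat).
Implicit Types (x y : 'rV[R]_n) (K C A : set 'rV[R]_n) (L : 'M[R]_n).

Definition edot x y : R := \sum_(j < n) x 0 j * y 0 j.
Definition enorm x : R := Num.sqrt (edot x x).

Definition lsub L : set 'rV[R]_n := [set v | (v <= L)%MS].

Definition orth_proj K L : set 'rV[R]_n :=
  [set y | (y <= L)%MS /\ exists2 x, K x & forall v, (v <= L)%MS -> edot (x - y) v = 0].

Definition aff K : set 'rV[R]_n :=
  [set z | exists m (p : 'I_m -> 'rV[R]_n) (w : 'I_m -> R),
     [/\ forall j, K (p j), \sum_(j < m) w j = 1 & z = \sum_(j < m) w j *: p j]].

Definition ball_in A x (r : R) : set 'rV[R]_n := [set y | A y /\ enorm (y - x) <= r].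

Definition inradius C A : \bar R :=
  ereal_sup [set (r%:E)%E | r in [set r : R | 0 <= r /\ exists2 x, A x & ball_in A x r `<=` C]].

End Defs.

(* Main.v *)
Require Import Defs.
From HB Require Import structures.
From mathcomp Require Import all_boot all_order all_algebra.
From mathcomp Require Import all_classical all_reals all_analysis.
Import Order.TTheory GRing.Theory Num.Theory.
Import numFieldNormedType.Exports.
Local Open Scope classical_set_scope.
Local Open Scope ring_scope.
Set Implicit Arguments. Unset Strict Implicit.

Section Helpers.
Variables (R : realType) (n : nat).
Implicit Types (x y z w v : 'rV[R]_n).

Definition dotm x y : R := (x *m y^T) 0 0.

Lemma edotE x y : edot x y = dotm x y.
Proof. by rewrite /edot /dotm !mxE; apply: eq_bigr => j _; rewrite mxE. Qed.

Lemma dotmC x y : dotm x y = dotm y x.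
Proof. rewrite /dotm; have -> : y *m x^T = (x *m y^T)^T by rewrite trmx_mul trmxK. rewrite [RHS]mxE. done. Qed.

Lemma dotmDl x y z : dotm (x + y) z = dotm x z + dotm y z.
Proof. by rewrite /dotm mulmxDl mxE. Qed.

Lemma dotmBl x y z : dotm (x - y) z = dotm x z - dotm y z.
Proof. by rewrite /dotm mulmxBl !mxE. Qed.

Lemma dotmZl (c : R) x y : dotm (c *: x) y = c * dotm x y.
Proof. by rewrite /dotm -scalemxAl !mxE. Qed.

Lemma dotmDr x y z : dotm z (x + y) = dotm z x + dotm z y.
Proof. by rewrite dotmC dotmDl !(dotmC z). Qed.

Lemma dotmBr x y z : dotm z (x - y) = dotm z x - dotm z y.
Proof. by rewrite dotmC dotmBl !(dotmC z). Qed.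

Lemma dotmZr (c : R) x y : dotm y (c *: x) = c * dotm y x.
Proof. by rewrite dotmC dotmZl dotmC. Qed.

Lemma dotm_ge0 x : 0 <= dotm x x.
Proof. by rewrite -edotE /edot sumr_ge0 // => j _; rewrite -expr2 sqr_ge0. Qed.

Lemma dotm_eq0 x : dotm x x = 0 -> x = 0.
Proof.
rewrite -edotE /edot => H; apply/rowP => j; rewrite mxE.
have := @psumr_eq0P _ _ predT (fun j => x 0 j * x 0 j).
move=> /(_ (fun j _ => ltac:(by rewrite -expr2 sqr_ge0)) H j isT).
by move/eqP; rewrite mulf_eq0 orbb => /eqP.
Qed.

Lemma enormE x : enorm x = Num.sqrt (dotm x x).
Proof. by rewrite /enorm edotE. Qed.

Lemma enorm_le x (r : R) : 0 <= r -> (enorm x <= r) = (dotm x x <= r ^+ 2).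
Proof.
move=> r0; rewrite enormE -ler_sqr ?nnegrE ?sqrtr_ge0 //.
by rewrite sqr_sqrtr // dotm_ge0.
Qed.
End Helpers.
Section Proj.
Variables (R : realType) (n : nat) (L : 'M[R]_n).
Implicit Types (x y z w v : 'rV[R]_n).

Let B := row_base L.
Let G := B *m B^T.

Lemma G_unit : G \in unitmx.
Proof.
rewrite -row_free_unit -kermx_eq0 -submx0; apply/row_subP => j.
set v := row j (kermx G).
have vG : v *m G = 0 by rewrite /v -row_mul mulmx_ker row0.
have vB : v *m B = 0.
  apply: dotm_eq0; rewrite /dotm trmx_mul mulmxA -(mulmxA v) vG mul0mx mxE //.
have : v *m B = 0 *m B by rewrite vB mul0mx.
by move/(row_free_inj (row_base_free L)) ->; rewrite sub0mx.
Qed.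

Definition projm : 'M[R]_n := B^T *m invmx G *m B.

Lemma projm_sub x : (x *m projm <= L)%MS.
Proof. by rewrite /projm mulmxA -(eq_row_base L) submxMl. Qed.

Lemma projm_orthB x : (x - x *m projm) *m B^T = 0.
Proof.
have PB : projm *m B^T = B^T.
  rewrite /projm -[_ *m B *m B^T]mulmxA -/G.
  by rewrite -mulmxA mulVmx ?G_unit // mulmx1.
by rewrite mulmxBl -mulmxA PB subrr.
Qed.

Definition orthL w := forall v, (v <= L)%MS -> dotm w v = 0.

Lemma orthB_orthL w : w *m B^T = 0 -> orthL w.
Proof.
move=> wB v; rewrite -(eq_row_base L) -/B => /submxP [a ->].
by rewrite /dotm trmx_mul mulmxA wB mul0mx mxE.
Qed.

Lemma orthL_orthB w : orthL w -> w *m B^T = 0.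
Proof.
move=> wL; apply/rowP => j; rewrite [RHS]mxE.
have H : (row j B <= L)%MS by rewrite -(eq_row_base L) row_sub.
transitivity (dotm w (row j B)); last exact: wL.
rewrite /dotm !mxE; apply: eq_bigr => k _; rewrite !mxE //.
Qed.

Lemma projm_orth x : orthL (x - x *m projm).
Proof. exact/orthB_orthL/projm_orthB. Qed.

Lemma projm_uniq k w : (w <= L)%MS -> orthL (k - w) -> k *m projm = w.
Proof.
move=> wL kw.
set e := k *m projm - w.
have eL : (e <= L)%MS by rewrite addmx_sub ?eqmx_opp ?projm_sub.
have eo : e *m B^T = 0.
  have -> : e = (k - w) - (k - k *m projm) by rewrite /e opprB [RHS]addrC -[RHS]addrA addKr.
  by rewrite mulmxBl projm_orthB (orthL_orthB kw) subrr.
have : dotm e e = 0 by apply: orthB_orthL.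
by move/dotm_eq0/eqP; rewrite subr_eq0 => /eqP.
Qed.

Lemma projm_norm d : dotm (d *m projm) (d *m projm) <= dotm d d.
Proof.
set p := d *m projm.
have qp : dotm (d - p) p = 0 by apply: projm_orth; apply: projm_sub.
have -> : dotm d d = dotm p p + dotm (d - p) (d - p).
  have : dotm d p - dotm p p = 0 by rewrite -dotmBl.
  move/eqP; rewrite subr_eq0 => /eqP e1.
  by rewrite dotmBl !dotmBr (dotmC p d) e1 subrr subr0 addrC subrK.
by rewrite lerDl dotm_ge0.
Qed.
End Proj.
From mathcomp Require Import ring lra.

Lemma aff_sub (R : realType) (n : nat) (K : set 'rV[R]_n) (p : 'rV[R]_n) (U : 'M[R]_n) z :
  (forall x, K x -> (x - p <= U)%MS) -> aff K z -> (z - p <= U)%MS.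
Proof.
move=> KU [m [q [w [Kq w1 ->]]]].
have -> : \sum_(j < m) w j *: q j - p = \sum_(j < m) w j *: (q j - p).
  rewrite -[p in LHS]scale1r -w1 scaler_suml -sumrB.
  by apply: eq_bigr => j _; rewrite scalerBr.
by apply: summx_sub => j _; apply: scalemx_sub; apply: KU.
Qed.

Lemma tbound (R : realType) (r a : R) : 0 < r -> 0 <= a ->
  (r / (a + 1)) ^+ 2 * a <= r ^+ 2.
Proof.
move=> r0 a0.
have s0 : 0 < a + 1 by lra.
rewrite expr_div_n mulrAC ler_pdivrMr ?exprn_gt0 //.
rewrite ler_pM2l ?exprn_gt0 //; nra.
Qed.

Theorem lemma4p2 (R : realType) (n i : nat) (K : set 'rV[R]_n) (L : 'M[R]_n) :
  (1 <= i)%N -> (i <= n)%N ->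
  compact K -> convex_set K ->
  (exists (p : 'rV[R]_n) (U : 'M[R]_n), \rank U = i /\ forall x, K x -> (x - p <= U)%MS) ->
  \rank L = i ->
  (inradius (orth_proj K L) (lsub L) <= inradius K (aff K))%E.
Proof.
move=> _ _ _ _ [p [U [rU KU]]] rL.
apply: le_ereal_sup => _ [r [r0 [y Ly Hball]] <-]; exists r => //; split => //.
have : orth_proj K L y.
  by apply: Hball; split => //; rewrite subrr enorm_le // /dotm mul0mx mxE sqr_ge0.
case=> _ [x0 Kx0 ox0].
have Px0 : x0 *m projm L = y.
  by apply: projm_uniq => // v vL; rewrite -edotE; apply: ox0.
exists x0.
  exists 1%N, (fun _ => x0), (fun _ => 1); split => //; first by rewrite big_ord1.
  by rewrite big_ord1 scale1r.
move=> z [Az Hz].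
have x0U : (x0 - p <= U)%MS by apply: KU.
have dU : (z - x0 <= U)%MS.
  have -> : z - x0 = (z - p) - (x0 - p) by rewrite opprB addrA subrK.
  by rewrite addmx_sub ?eqmx_opp // (aff_sub KU Az).
have [r0'|rpos] := eqVneq r 0.
  move: Hz; rewrite r0' enorm_le // expr0n /= => Hz.
  have /dotm_eq0/eqP : dotm (z - x0) (z - x0) = 0 by apply/le_anti; rewrite Hz dotm_ge0.
  by rewrite subr_eq0 => /eqP ->.
have rp : 0 < r by rewrite lt_neqAle eq_sym rpos r0.
have key : forall w, (w <= L)%MS -> dotm w w <= r ^+ 2 ->
    exists2 k, K k & (k - x0) *m projm L = w.
  move=> w wL ww.
  have : orth_proj K L (y + w).
    apply: Hball; split; first by rewrite /lsub /= addmx_sub.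
    by rewrite (addrC y w) addrK enorm_le.
  case=> yw [k Kk ok]; exists k => //.
  have kP : k *m projm L = y + w.
    by apply: projm_uniq => // v vL; rewrite -edotE; apply: ok.
  by rewrite mulmxBl Px0 kP (addrC y w) addrK.
have cover : (L <= U *m projm L)%MS.
  apply/row_subP => j; set v := row j L.
  have vL : (v <= L)%MS by apply: row_sub.
  set t := r / (dotm v v + 1).
  have tp : 0 < t by rewrite divr_gt0 // ltr_pwDr ?dotm_ge0.
  have [k Kk kP] : exists2 k, K k & (k - x0) *m projm L = t *: v.
    apply: key; first exact: scalemx_sub.
    by rewrite dotmZl dotmZr mulrA -expr2 tbound // dotm_ge0.
  have -> : v = (t^-1 *: (k - x0)) *m projm L.
    by rewrite -scalemxAl kP scalerA mulVf ?scale1r // gt_eqF.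
  apply: submxMr; apply: scalemx_sub.
  have -> : k - x0 = (k - p) - (x0 - p) by rewrite opprB addrA subrK.
  by rewrite addmx_sub ?eqmx_opp // KU.
have inj : forall u : 'rV[R]_n, (u <= U)%MS -> u *m projm L = 0 -> u = 0.
  move=> u uU uP.
  have hk := mxrank_mul_ker U (projm L).
  have r1 : \rank (U *m projm L) = \rank U.
    apply/eqP; rewrite eqn_leq mxrankM_maxl rU -rL mxrankS //.
  have : \rank (U :&: kermx (projm L))%MS = 0%N.
    by move: hk; rewrite r1 => /eqP; rewrite -{2}[\rank U]addn0 eqn_add2l => /eqP.
  move/eqP; rewrite mxrank_eq0 => /eqP h0.
  have : (u <= U :&: kermx (projm L))%MS by rewrite sub_capmx uU; apply/sub_kermxP.
  by rewrite h0 submx0 => /eqP.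
set d := z - x0.
have [k Kk kP] : exists2 k, K k & (k - x0) *m projm L = d *m projm L.
  apply: key; first exact: projm_sub.
  apply: le_trans (projm_norm L d) _.
  by rewrite -enorm_le.
have : (k - x0) - d = 0.
  apply: inj.
    have kU : (k - x0 <= U)%MS.
      have -> : k - x0 = (k - p) - (x0 - p) by rewrite opprB addrA subrK.
      by rewrite addmx_sub ?eqmx_opp // KU.
    by rewrite addmx_sub ?eqmx_opp.
  by rewrite mulmxBl kP subrr.
by rewrite /d opprB addrA subrK => /eqP; rewrite subr_eq0 => /eqP <-.
Qed.
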